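(* Let $P=\{P_n\}_{n\ge0}$ be a $\Sigma$-collection of sets (each $P_n$ carries an action of the symmetric group $\mathbb S_n$). Then there is a bijection between operad structures on $P$ (unit $e\in P_1$ and compositions $\gamma_{m_1,\ldots,m_n}:P_n\times P_{m_1}\times\cdots\times P_{m_n}\to P_{m_1+\cdots+m_n}$ satisfying the usual associativity, unitality and equivariance conditions) and structures of a monoid on $\underline P$ in $(\underline{Cat},\ltimes,\underline{\bf 1})$, given by $\{F,\rho\}:\underline P\ltimes\underline P\to\underline P$ and $\{I,\iota\}:\underline{\bf1}\to\underline P$ satisfying the associativity and unit axioms, such that $\rho$ and $\iota$ are natural isomorphisms whose components preserve the linear orders on the categories ${\bf n}$ (with $R(p)\ltimes_\psi\underline P=\coprod_{i=1}^n{\bf m_i}$, for $p\in P_n$ and $\psi$ picking $p_i\in P_{m_i}$, ordered lexicographically).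
   Context: $\underline{Cat}$ is the category whose objects are pairs $\underline D=\{D,R\}$ with $D$ a small category and $R:D\to Cat$ a functor, and whose morphisms $\{D,R\}\to\{D',R'\}$ are pairs $\{F,\rho\}$ with $F:D\to D'$ a functor and $\rho:R'\circ F\Rightarrow R$ a natural transformation. Semi-direct product: for $\underline D=\{D,R\}$, $\underline D'=\{D',R'\}$, an object $d\in D$ and a functor $\psi:R(d)\to D'$, the category $R(d)\ltimes_\psi\underline D'$ has objects pairs $\{a,b\}$ with $a\in R(d)$, $b\in R'\psi(a)$; morphisms $\{a_1,b_1\}\to\{a_2,b_2\}$ are pairs $\{\alpha,\beta\}$ with $\alpha:a_1\to a_2$ in $R(d)$ and $\beta:R'\psi(\alpha)(b_1)\to b_2$ in $R'\psi(a_2)$; composition is $\{\alpha_2,\beta_2\}\circ\{\alpha_1,\beta_1\}=\{\alpha_2\alpha_1,\beta_2\circ R'\psi(\alpha_2)(\beta_1)\}$. The category $D\ltimes D'$ has objects pairs $\{d,\psi_d\}$ with $d\in D$ and $\psi_d:R(d)\to D'$ a functor; morphisms $\{d_1,\psi_{d_1}\}\to\{d_2,\psi_{d_2}\}$ are pairs $\{f,\phi\}$ with $f:d_1\to d_2$ in $D$ and $\phi:\psi_{d_1}\Rightarrow\psi_{d_2}\circ R(f)$ a natural transformation. The functor $R\ltimes R':D\ltimes D'\to Cat$ sends $\{d,\psi_d\}$ to $R(d)\ltimes_{\psi_d}\underline D'$ and a morphism $\{f,\phi\}$ to the functor sending $\{\alpha,\beta\}:\{a_1,b_1\}\to\{a_2,b_2\}$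 to $\{R(f)(\alpha),R'(\phi_{a_2})(\beta)\}$. Then $\underline D\ltimes\underline D':=\{D\ltimes D',R\ltimes R'\}$. On morphisms, $\{F,\rho\}\ltimes\{F',\rho'\}$ sends $\{d,\psi\}$ to $\{F(d),F'\circ\psi\circ\rho_d\}$, with the evident accompanying natural transformation $\{a,b\}\mapsto\{\rho_d(a),\rho'_{\psi\rho_d(a)}(b)\}$. The unit $\underline{\bf 1}$ is the one-object discrete category ${\bf 1}$ with the functor sending its object to ${\bf 1}\in Cat$. With these, $(\underline{Cat},\ltimes,\underline{\bf1})$ is a monoidal category. For $n\ge0$, ${\bf n}$ is a discrete category with $n$ linearly ordered objects, and an isomorphism $\mathbb S_n\cong\mathrm{Aut}({\bf n})$ is fixed. For a $\Sigma$-collection $P$, $\underline P=\{P,R\}$ where the category $P$ has object set $\coprod_{n\ge0}P_n$, and for $p,q\in P_n$, $\mathrm{Hom}(p,q)=\{\sigma\in\mathbb S_n:\sigma(p)=q\}$ (no morphisms between different arities), composition given by the group law; $R$ sends every $p\in P_n$ to ${\bf n}$ and a morphism $\sigma$ to the corresponding automorphism of ${\bf n}$. *)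

(* Defs.v *)
From Stdlib Require Import Eqdep_dec.
From HB Require Import structures.
From mathcomp Require Import all_boot all_fingroup.
Set Implicit Arguments. Unset Strict Implicit. Unset Printing Implicit Defensive.

(* composition).  All instances built below are genuine categories.          *)
Record cat := Cat {
  ob : Type;
  hom : ob -> ob -> Type;
  idc : forall x, hom x x;
  comp : forall x y z, hom y z -> hom x y -> hom x z }.
Arguments hom {c}. Arguments idc {c}. Arguments comp {c x y z}.

(* An object {D,R} of Cat-underline whose functor R : D -> Cat takes values  *)
(* in discrete categories (identified with their sets of objects).  All the  *)
(* objects relevant to the statement (P-underline, 1-underline and their     *)
(* iterated semi-direct products) are of this kind, and this full            *)
(* subcategory of Cat-underline is closed under the semi-direct product.    *)
Record dcat := DCat {
  dC :> cat;
  fib : ob dC -> Type;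
  fibh : forall x y, hom x y -> fib x -> fib y;
  fibh_id : forall x a, fibh (idc x) a = a;
  fibh_comp : forall x y z (g : hom y z) (f : hom x y) a,
      fibh (comp g f) a = fibh g (fibh f a) }.
Arguments fib {d}. Arguments fibh {d x y}.

Section SemiDirect.
Variables X Y : dcat.

Definition sd_ob := {d : ob X & fib d -> ob Y}.
Definition sd_hom (u v : sd_ob) :=
  {f : hom (projT1 u) (projT1 v) &
     forall a, hom (projT2 u a) (projT2 v (fibh f a))}.
Definition sd_id (u : sd_ob) : sd_hom u u :=
  existT _ (idc (projT1 u))
    (fun a => eq_rect_r (fun z => hom (projT2 u a) (projT2 u z))
                (idc (projT2 u a)) (fibh_id a)).
Definition sd_comp (u v w : sd_ob) (g : sd_hom v w) (f : sd_hom u v) : sd_hom u w :=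
  existT _ (comp (projT1 g) (projT1 f))
    (fun a => eq_rect_r (fun z => hom (projT2 u a) (projT2 w z))
                (comp (projT2 g (fibh (projT1 f) a)) (projT2 f a))
                (fibh_comp (projT1 g) (projT1 f) a)).
Definition sd_cat : cat := @Cat sd_ob sd_hom sd_id sd_comp.

Definition sd_fib (u : sd_ob) := {a : fib (projT1 u) & fib (projT2 u a)}.
Definition sd_fibh (u v : sd_ob) (f : sd_hom u v) (c : sd_fib u) : sd_fib v :=
  existT _ (fibh (projT1 f) (projT1 c)) (fibh (projT2 f (projT1 c)) (projT2 c)).

Lemma sd_fibh_id (u : sd_ob) c : sd_fibh (sd_id u) c = c.
Proof.
case: u c => d psi [a b] /=; rewrite /sd_fibh /=.
move: (fibh_id a); set z := fibh (idc d) a; clearbody z => e.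
by subst z; rewrite /= fibh_id.
Qed.

Lemma sd_fibh_comp (u v w : sd_ob) (g : sd_hom v w) (f : sd_hom u v) c :
  sd_fibh (sd_comp g f) c = sd_fibh g (sd_fibh f c).
Proof.
case: c => a b; rewrite /sd_fibh /=.
move: (fibh_comp (projT1 g) (projT1 f) a).
set z := fibh (comp _ _) a; clearbody z => e.
by subst z; rewrite /= fibh_comp.
Qed.

Definition sd : dcat := @DCat sd_cat sd_fib sd_fibh sd_fibh_id sd_fibh_comp.
End SemiDirect.

Definition one_cat : cat := @Cat unit (fun _ _ => unit) (fun _ => tt) (fun _ _ _ _ _ => tt).
Definition one : dcat :=
  @DCat one_cat (fun _ => unit) (fun _ _ _ a => a) (fun _ _ => erefl) (fun _ _ _ _ _ _ => erefl).

(* Morphisms {F, rho} : {D,R} -> {D',R'} with rho : R' o F => R.             *)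
Record dmor (X Y : dcat) := DMor {
  dob : ob X -> ob Y;
  dhom : forall x y, hom x y -> hom (dob x) (dob y);
  dnat : forall x, fib (dob x) -> fib x }.
Arguments dob {X Y}. Arguments dhom {X Y} _ {x y}. Arguments dnat {X Y}.

(* genuine morphisms: F a functor, rho a natural transformation *)
Record cmor (X Y : dcat) := CMor {
  cm :> dmor X Y;
  cm_id : forall x, dhom cm (idc x) = idc (dob cm x);
  cm_comp : forall x y z (g : hom y z) (f : hom x y),
      dhom cm (comp g f) = comp (dhom cm g) (dhom cm f);
  cm_nat : forall x y (f : hom x y) a,
      dnat cm y (fibh (dhom cm f) a) = fibh f (dnat cm x a) }.

Definition cid (X : dcat) : cmor X X :=
  @CMor X X (@DMor X X id (fun _ _ f => f) (fun _ a => a))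
     (fun _ => erefl) (fun _ _ _ _ _ => erefl) (fun _ _ _ _ => erefl).

Definition dcomp (X Y Z : dcat) (N : dmor Y Z) (M : dmor X Y) : dmor X Z :=
  @DMor X Z (fun x => dob N (dob M x)) (fun x y f => dhom N (dhom M f))
     (fun x c => dnat M x (dnat N (dob M x) c)).

Definition dmor_eq (X Y : dcat) (M N : dmor X Y) : Prop :=
  [/\ forall x, dob M x = dob N x,
      forall x y (f : hom x y),
        existT (fun xy : ob Y * ob Y => hom xy.1 xy.2) (dob M x, dob M y) (dhom M f)
        = existT (fun xy : ob Y * ob Y => hom xy.1 xy.2) (dob N x, dob N y) (dhom N f)
    & forall x,
        existT (fun y : ob Y => fib y -> fib x) (dob M x) (dnat M x)
        = existT (fun y : ob Y => fib y -> fib x) (dob N x) (dnat N x)].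

Definition msd (X X' Y Y' : dcat) (M : cmor X X') (N : cmor Y Y') :
  dmor (sd X Y) (sd X' Y') :=
  @DMor (sd X Y) (sd X' Y')
    (fun u => existT (fun d' => fib d' -> ob Y') (dob M (projT1 u))
                 (fun a' => dob N (projT2 u (dnat M (projT1 u) a'))))
    (fun u v h =>
       existT _ (dhom M (projT1 h))
         (fun a' => eq_rect_r
            (fun z => hom (dob N (projT2 u (dnat M (projT1 u) a'))) (dob N (projT2 v z)))
            (dhom N (projT2 h (dnat M (projT1 u) a')))
            (@cm_nat _ _ M _ _ (projT1 h) a')))
    (fun u c => existT _ (dnat M (projT1 u) (projT1 c))
                         (dnat N (projT2 u (dnat M (projT1 u) (projT1 c))) (projT2 c))).

Definition assoc_mor (X Y Z : dcat) : dmor (sd (sd X Y) Z) (sd X (sd Y Z)) :=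
  @DMor (sd (sd X Y) Z) (sd X (sd Y Z))
    (fun u => existT (fun d => fib d -> ob (sd Y Z)) (projT1 (projT1 u))
       (fun a => existT (fun e => fib e -> ob Z) (projT2 (projT1 u) a)
                   (fun b => projT2 u (existT _ a b))))
    (fun u v h => existT _ (projT1 (projT1 h))
       (fun a => existT _ (projT2 (projT1 h) a) (fun b => projT2 h (existT _ a b))))
    (fun u c => existT _ (existT _ (projT1 c) (projT1 (projT2 c))) (projT2 (projT2 c))).

Definition lunitor (X : dcat) : dmor (sd one X) X :=
  @DMor (sd one X) X (fun u => projT2 u tt) (fun u v h => projT2 h tt)
    (fun u b => existT _ tt b).
Definition runitor (X : dcat) : dmor (sd X one) X :=
  @DMor (sd X one) X (fun u => projT1 u) (fun u v h => projT1 h)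
    (fun u a => existT (fun _ => unit) a tt).

(* Sigma-collections.  S_n = Aut(n) acts on P_n; the group law of 'S_n is    *)
(* composition of automorphisms ((s * t) i = t (s i) in MathComp), and the   *)
(* action is compatible with it: (t o s)(p) = t(s(p)).                       *)
Record scoll := SColl {
  sc :> nat -> Type;
  act : forall n, 'S_n -> sc n -> sc n;
  act1 : forall n (x : sc n), act 1%g x = x;
  actM : forall n (s t : 'S_n) (x : sc n), act (s * t)%g x = act t (act s x) }.
Arguments act {_ _} _ _.

Section PCat.
Variable P : scoll.

Definition P_ob := {n : nat & P n}.
(* Hom(p,q) = { sigma in S_n | sigma(p) = q }  (empty if arities differ) *)
Definition P_hom (u v : P_ob) := {s : 'S_(tag u) | existT P (tag u) (act s (tagged u)) = v}.

Lemma P_id_proof (u : P_ob) : existT P (tag u) (act 1%g (tagged u)) = u.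
Proof. by case: u => n p /=; rewrite act1. Qed.
Definition P_id (u : P_ob) : P_hom u u := exist _ (1%g : 'S_(tag u)) (P_id_proof u).

Definition P_ar (u v : P_ob) (f : P_hom u v) : tag u = tag v :=
  f_equal (@projT1 nat P) (proj2_sig f).

Lemma P_comp_proof n (p : P n) (v w : P_ob) (sf : 'S_n) (sg : 'S_(tag v))
  (e : tag v = n) :
  existT P n (act sf p) = v -> existT P (tag v) (act sg (tagged v)) = w ->
  existT P n (act (sf * cast_perm e sg)%g p) = w.
Proof.
case: v sg e => m q /= sg e; subst m => H1 H2.
have {}H1 := inj_pair2_eq_dec _ (fun x y : nat => decP (@eqP _ x y)) _ _ _ _ H1.
by rewrite actM cast_perm_id H1.
Qed.

Definition P_comp (u v w : P_ob) (g : P_hom v w) (f : P_hom u v) : P_hom u w :=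
  exist _ (sval f * cast_perm (esym (P_ar f)) (sval g))%g
    (@P_comp_proof (tag u) (tagged u) v w (sval f) (sval g)
       (esym (P_ar f)) (proj2_sig f) (proj2_sig g)).

Definition P_cat : cat := @Cat P_ob P_hom P_id P_comp.

Definition P_fib (u : P_ob) := 'I_(tag u).
Definition P_fibh (u v : P_ob) (f : P_hom u v) (i : P_fib u) : P_fib v :=
  cast_ord (P_ar f) (sval f i).

Lemma P_fibh_id (u : P_ob) i : P_fibh (P_id u) i = i.
Proof. by apply: val_inj; rewrite /= perm1. Qed.

Lemma P_fibh_comp (u v w : P_ob) (g : P_hom v w) (f : P_hom u v) i :
  P_fibh (P_comp g f) i = P_fibh g (P_fibh f i).
Proof.
apply: val_inj; rewrite /P_fibh /= permM cast_permE /=.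
by congr (nat_of_ord (sval g _)); apply: val_inj.
Qed.

Definition uP : dcat := @DCat P_cat P_fib P_fibh P_fibh_id P_fibh_comp.
End PCat.

Definition lexle (P : scoll) (x : ob (sd (uP P) (uP P))) (c d : fib x) : bool :=
  let a1 := nat_of_ord (projT1 c : 'I_(tag (projT1 x))) in
  let a2 := nat_of_ord (projT1 d : 'I_(tag (projT1 x))) in
  (a1 < a2) || ((a1 == a2) &&
     (nat_of_ord (projT2 c : 'I_(tag (projT2 x (projT1 c))))
       <= nat_of_ord (projT2 d : 'I_(tag (projT2 x (projT1 d)))))).

Record monoid_str (P : scoll) := MonStr {
  ms_mu : cmor (sd (uP P) (uP P)) (uP P);
  ms_eta : cmor one (uP P);
  ms_assoc : dmor_eq (dcomp ms_mu (msd ms_mu (cid (uP P))))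
                     (dcomp ms_mu (dcomp (msd (cid (uP P)) ms_mu)
                                         (assoc_mor (uP P) (uP P) (uP P))));
  ms_unitl : dmor_eq (dcomp ms_mu (msd ms_eta (cid (uP P)))) (lunitor (uP P));
  ms_unitr : dmor_eq (dcomp ms_mu (msd (cid (uP P)) ms_eta)) (runitor (uP P));
  ms_mu_iso : forall x, bijective (dnat ms_mu x);
  ms_mu_ord : forall x (i j : 'I_(tag (dob ms_mu x))),
      i <= j -> lexle (dnat ms_mu x i) (dnat ms_mu x j);
  ms_eta_iso : forall x, bijective (dnat ms_eta x) }.

(* Operads.  join m i j : index of input j of the i-th block in the          *)
(* concatenation 'I_(m_0 + ... + m_(n-1)) (lexicographic order).            *)
Definition offs n (m : 'I_n -> nat) (i : 'I_n) := \sum_(k < n | k < i) m k.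

Lemma join_subproof n (m : 'I_n -> nat) (i : 'I_n) (j : 'I_(m i)) :
  offs m i + j < \sum_(k < n) m k.
Proof.
rewrite (bigID (fun k : 'I_n => k < i)) /=.
rewrite ltn_add2l (bigD1 i) ?ltnn //=.
exact: leq_trans (ltn_ord j) (leq_addr _ _).
Qed.

Definition join n (m : 'I_n -> nat) (i : 'I_n) (j : 'I_(m i)) : 'I_(\sum_(k < n) m k) :=
  Ordinal (join_subproof j).
Arguments join {n} m i j.

Unset Implicit Arguments.
Record operad (P : scoll) := Operad {
  op_e : P 1;
  op_g : forall n (p : P n) (m : 'I_n -> nat), (forall i, P (m i)) -> P (\sum_(i < n) m i);
  op_unitl : forall (m : 'I_1 -> nat) (q : forall i, P (m i)),
      existT P _ (op_g 1 op_e m q) = existT P _ (q ord0);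
  op_unitr : forall n (p : P n),
      existT P _ (op_g n p (fun _ => 1) (fun _ => op_e)) = existT P n p;
  op_assoc : forall n (p : P n) (m : 'I_n -> nat) (q : forall i, P (m i))
      (l : 'I_(\sum_(i < n) m i) -> nat) (r : forall j, P (l j)),
      existT P _ (op_g _ (op_g n p m q) l r)
      = existT P _ (op_g n p (fun i => \sum_(j < m i) l (join m i j))
                     (fun i => op_g (m i) (q i) (fun j => l (join m i j)) (fun j => r (join m i j))));
  op_equiv1 : forall n (s : 'S_n) (p : P n) (m : 'I_n -> nat) (q : forall i, P (m i)),
      exists t : 'S_(\sum_(i < n) m (s i)),
        (forall a (b : 'I_(m (s a))),
            nat_of_ord (t (join (fun i => m (s i)) a b)) = nat_of_ord (join m (s a) b))
        /\ existT P _ (act t (op_g n p (fun i => m (s i)) (fun i => q (s i))))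
           = existT P _ (op_g n (act s p) m q);
  op_equiv2 : forall n (p : P n) (m : 'I_n -> nat) (q : forall i, P (m i))
      (tau : forall i, 'S_(m i)),
      exists t : 'S_(\sum_(i < n) m i),
        (forall a (b : 'I_(m a)), t (join m a b) = join m a (tau a b))
        /\ act t (op_g n p m q) = op_g n p m (fun i => act (tau i) (q i)) }.
Set Implicit Arguments.
Arguments op_e {P}. Arguments op_g {P}.

(* Main.v *)
Require Import Defs.
From HB Require Import structures.
From mathcomp Require Import all_boot all_fingroup.
From Stdlib Require Import FunctionalExtensionality ProofIrrelevance Eqdep Eqdep_dec ClassicalEpsilon.
Set Implicit Arguments. Unset Strict Implicit. Unset Printing Implicit Defensive.

Section JoinArith.
Variables (n : nat) (m : 'I_n -> nat).

Lemma offs_mono (a a' : 'I_n) : a < a' -> offs m a + m a <= offs m a'.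
Proof.
move=> lt; rewrite /offs (bigID (fun k : 'I_n => k < a) (fun k : 'I_n => k < a')) /=.
rewrite [X in _ <= X + _](eq_bigl (fun k : 'I_n => k < a)); last first.
  by move=> k /=; case: (ltnP k a) => ka; rewrite ?andbF ?andbT // (ltn_trans ka lt).
rewrite leq_add2l (bigD1 a) /= ?lt ?ltnn //; exact: leq_addr.
Qed.

Lemma join_lt_nat (a a' : 'I_n) x x' : x < m a -> a < a' -> offs m a + x < offs m a' + x'.
Proof.
move=> xa lt; apply: (leq_trans _ (leq_addr _ _)).
by apply: leq_trans (offs_mono lt); rewrite ltn_add2l.
Qed.

Lemma join_leq_nat (a a' : 'I_n) x x' : x < m a -> x' < m a' ->
  (offs m a + x <= offs m a' + x') = (a < a') || ((val a == val a') && (x <= x')).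
Proof.
move=> xa xa'; case: (ltngtP a a') => [lt|gt|eq] /=.
- by apply: ltnW; apply: join_lt_nat.
- by apply/negbTE; rewrite -ltnNge; apply: join_lt_nat.
- have aa : a = a' by apply: val_inj.
  by subst a'; rewrite leq_add2l ?eqxx.
Qed.

Lemma join_ltn_nat (a a' : 'I_n) x x' : x < m a -> x' < m a' ->
  (offs m a + x < offs m a' + x') = (a < a') || ((val a == val a') && (x < x')).
Proof.
move=> xa xa'; case: (ltngtP a a') => [lt|gt|eq] /=.
- by apply: join_lt_nat.
- by apply/negbTE; rewrite -leqNgt; apply: ltnW; apply: join_lt_nat.
- have aa : a = a' by apply: val_inj.
  by subst a'; rewrite ltn_add2l ?eqxx.
Qed.

Lemma join_inj_nat (a a' : 'I_n) x x' : x < m a -> x' < m a' ->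
  offs m a + x = offs m a' + x' -> a = a' /\ x = x'.
Proof.
move=> xa xa' E.
have := join_leq_nat xa xa'; have := join_leq_nat xa' xa.
rewrite E leqnn /=; case: (ltngtP a a') => //= eq.
have aa : a = a' by apply: val_inj.
by split=> //; subst a'; move: E => /addnI.
Qed.

Definition joinT (c : {a : 'I_n & 'I_(m a)}) : 'I_(\sum_(i < n) m i) := join m (tag c) (tagged c).

Lemma joinT_val c : val (joinT c) = offs m (tag c) + tagged c.
Proof. by []. Qed.

Lemma joinT_inj : injective joinT.
Proof.
move=> [a x] [a' x'] /(congr1 val); rewrite !joinT_val /=.
move=> /(join_inj_nat (ltn_ord x) (ltn_ord x')) [aa xx]; subst a'.
by congr existT; apply: val_inj.
Qed.

Lemma card_sig : #|{: {a : 'I_n & 'I_(m a)}}| = \sum_(i < n) m i.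
Proof.
rewrite card_tagged sumnE big_map big_enum /=.
by apply: eq_bigr => i _; rewrite card_ord.
Qed.

Lemma joinT_surj k : exists c, joinT c == k.
Proof.
have := @inj_card_onto _ _ joinT joinT_inj.
rewrite card_ord card_sig leqnn => /(_ isT k) /codomP [c ->].
by exists c.
Qed.

Definition unjoin (k : 'I_(\sum_(i < n) m i)) : {a : 'I_n & 'I_(m a)} := xchoose (joinT_surj k).

Lemma unjoinK : cancel unjoin joinT.
Proof. by move=> k; apply/eqP; exact: (xchooseP (joinT_surj k)). Qed.

Lemma joinTK : cancel joinT unjoin.
Proof. by move=> c; apply: joinT_inj; rewrite unjoinK. Qed.

Lemma unjoin_join a (x : 'I_(m a)) : unjoin (join m a x) = existT _ a x.
Proof. exact: (joinTK (existT _ a x)). Qed.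

Lemma unjoin_inj : injective unjoin.
Proof. exact: can_inj unjoinK. Qed.

Lemma joinT_leq c d :
  (joinT c <= joinT d) = (tag c < tag d) || ((val (tag c) == val (tag d)) && (val (tagged c) <= val (tagged d))).
Proof. by rewrite !joinT_val join_leq_nat. Qed.

Lemma joinT_ltn c d :
  (joinT c < joinT d) = (tag c < tag d) || ((val (tag c) == val (tag d)) && (val (tagged c) < val (tagged d))).
Proof. by rewrite !joinT_val join_ltn_nat. Qed.

Lemma offs_ord0 (n' : nat) (m' : 'I_n'.+1 -> nat) : offs m' ord0 = 0.
Proof. by rewrite /offs big_pred0. Qed.

Lemma offs_const1 (a : 'I_n) : offs (fun _ : 'I_n => 1) a = a.
Proof.
rewrite /offs -(big_ord_widen n (fun _ => 1) (ltnW (ltn_ord a))).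
by rewrite sum1_card card_ord.
Qed.

End JoinArith.
Arguments joinT {n} m c.
Arguments unjoin {n} m k.

Lemma mono_id K (f : 'I_K -> nat) :
  (forall i j : 'I_K, i < j -> f i < f j) -> (forall i, f i < K) -> forall i, f i = i.
Proof.
move=> mono bnd.
have ge : forall j (H : j < K), j <= f (Ordinal H).
  elim=> [//|j IH] H.
  have H' : j < K by apply: ltnW.
  by apply: leq_ltn_trans (IH H') _; apply: mono.
have ge' : forall i : 'I_K, i <= f i by case=> j H; apply: ge.
pose g (i : 'I_K) : 'I_K := Ordinal (bnd i).
have ginj : injective g.
  move=> i j /(congr1 val) /= E; apply/eqP; apply/negP => /negP ne.
  case: (ltngtP i j) => [ij|ji|ij]; [have := mono _ _ ij|have := mono _ _ ji|]; rewrite ?E ?ltnn //.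
  by move: ne; rewrite (val_inj ij) eqxx.
have S : \sum_(i < K) (i : nat) = \sum_(i < K) f i.
  by rewrite (reindex_inj ginj).
have := @leqif_sum _ predT (fun i : 'I_K => val i == f i) (fun i => val i) (fun i => f i)
  (fun i _ => leqif_eq (ge' i)).
rewrite S => -[_] /esym; rewrite eqxx => /forallP H i.
by apply/esym/eqP; exact: (H i).
Qed.

Definition natural (X Y : dcat) (M : dmor X Y) :=
  forall x y (f : hom x y) a, dnat M y (fibh (dhom M f) a) = fibh f (dnat M x a).

Lemma natural_cm (X Y : dcat) (M : cmor X Y) : natural M.
Proof. exact: cm_nat. Qed.

Lemma natural_dcomp (X Y Z : dcat) (N : dmor Y Z) (M : dmor X Y) :
  natural N -> natural M -> natural (dcomp N M).
Proof. by move=> nN nM x y f a /=; rewrite nN nM. Qed.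

Lemma natural_msd (X X' Y Y' : dcat) (M : cmor X X') (N : cmor Y Y') : natural (msd M N).
Proof.
move=> u v h [a b] /=; rewrite /sd_fibh /=.
move: (@cm_nat _ _ M _ _ (projT1 h) a).
set z := dnat M (projT1 v) (fibh (dhom M (projT1 h)) a).
clearbody z => e; subst z => /=.
by rewrite cm_nat.
Qed.

Lemma natural_assoc (X Y Z : dcat) : natural (assoc_mor X Y Z).
Proof. by move=> u v h [a [b c]]. Qed.

Lemma natural_lunitor (X : dcat) : natural (lunitor X).
Proof. by move=> u v h b. Qed.

Lemma natural_runitor (X : dcat) : natural (runitor X).
Proof. by move=> u v h a. Qed.

Definition dinj (X Y : dcat) (M : dmor X Y) := forall x, injective (dnat M x).

Lemma dinj_dcomp (X Y Z : dcat) (N : dmor Y Z) (M : dmor X Y) :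
  dinj N -> dinj M -> dinj (dcomp N M).
Proof. by move=> iN iM x a b /= /iM /iN. Qed.

Lemma dinj_msd (X X' Y Y' : dcat) (M : cmor X X') (N : cmor Y Y') :
  dinj M -> dinj N -> dinj (msd M N).
Proof.
move=> iM iN u [a b] [a' b'] /= E.
have aa := iM _ _ _ (f_equal (@projT1 _ _) E); subst a'.
by move: (inj_pair2 _ _ _ _ _ E) => /iN ->.
Qed.

Lemma dinj_cid (X : dcat) : dinj (cid X).
Proof. by move=> x a b. Qed.

Lemma dinj_lunitor (X : dcat) : dinj (lunitor X).
Proof. by move=> x a b /= E; exact: (inj_pair2 _ _ _ _ _ E). Qed.

Lemma dinj_runitor (X : dcat) : dinj (runitor X).
Proof. by move=> x a b /= /(f_equal (@projT1 _ _)). Qed.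

Lemma dmor_eq_refl (X Y : dcat) (M N : dmor X Y) : M = N -> dmor_eq M N.
Proof. by move=> ->; split. Qed.

Section PLemmas.
Variable P : scoll.
Local Notation PO := (P_ob P).

Definition castP n n' (e : n = n') (y : P n) : P n' := eq_rect n P y n' e.

Lemma existT_castP n n' (e : n = n') (y : P n) : existT P n' (castP e y) = existT P n y.
Proof. by case: n' / e. Qed.

Lemma castP_id n (e : n = n) (y : P n) : castP e y = y.
Proof. by rewrite (eq_irrelevance e erefl). Qed.

Lemma act_castP n n' (e : n = n') (t : 'S_n) (y : P n) :
  Defs.act (cast_perm e t) (castP e y) = castP e (Defs.act t y).
Proof. by case: n' / e; rewrite cast_perm_id. Qed.

Lemma existT_P_inj n (y y' : P n) : existT P n y = existT P n y' -> y = y'.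
Proof. exact: (inj_pair2_eq_dec _ (fun x y : nat => decP (@eqP _ x y))). Qed.

Lemma sig_ord_eq (T : Type) (u1 u2 : PO) (f1 : 'I_(tag u1) -> T) (f2 : 'I_(tag u2) -> T) :
  u1 = u2 -> (forall i1 i2, val i1 = val i2 -> f1 i1 = f2 i2) ->
  existT (fun u : PO => 'I_(tag u) -> T) u1 f1 = existT (fun u : PO => 'I_(tag u) -> T) u2 f2.
Proof.
move=> e H; subst u2; congr existT.
by apply: functional_extensionality => i; apply: H.
Qed.

Lemma P_hom_ext (u v : PO) (f g : P_hom u v) :
  (forall i, val (P_fibh f i) = val (P_fibh g i)) -> f = g.
Proof.
move=> H; case: f g H => [s es] [t et] /= H.
have st : s = t by apply/permP => i; apply: val_inj; exact: H.
subst t; congr exist; apply: proof_irrelevance.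
Qed.

Lemma P_fibh_val (u v : PO) (f : P_hom u v) i : val (P_fibh f i) = val (sval f i).
Proof. by []. Qed.

Definition P_hom_of_eq (u v : PO) (e : u = v) : P_hom u v :=
  exist _ (1%g : 'S_(tag u)) (etrans (P_id_proof u) e).

Lemma P_fibh_of_eq (u v : PO) (e : u = v) i : val (P_fibh (P_hom_of_eq e) i) = val i.
Proof. by rewrite /= perm1. Qed.

Lemma dmor_ext (X : dcat) (M N : dmor X (uP P)) :
  (forall x, dob M x = dob N x) ->
  (forall x, existT (fun y : PO => 'I_(tag y) -> fib x) (dob M x) (dnat M x)
           = existT (fun y : PO => 'I_(tag y) -> fib x) (dob N x) (dnat N x)) ->
  natural M -> natural N -> dinj N -> M = N.
Proof.
case: M => obM hM nM; case: N => obN hN nN /= eob enat natM natN injN.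
have E : obM = obN by apply: functional_extensionality.
subst obN.
have E2 : nM = nN.
  apply: functional_extensionality_dep => x.
  exact: (inj_pair2 _ _ _ _ _ (enat x)).
subst nN; congr DMor.
apply: functional_extensionality_dep => x; apply: functional_extensionality_dep => y.
apply: functional_extensionality => f.
apply: P_hom_ext => i; congr val.
apply: (injN y); move: (natM x y f i) (natN x y f i) => /= -> -> //.
Qed.

End PLemmas.

Section Triple.
Variables (n : nat) (m : 'I_n -> nat) (T : {a : 'I_n & 'I_(m a)} -> nat).
Local Notation E := {c : {a : 'I_n & 'I_(m a)} & 'I_(T c)}.
Definition tl (k : 'I_(\sum_(i < n) m i)) := T (unjoin m k).
Definition tla (a : 'I_n) (b : 'I_(m a)) := T (existT (fun a => 'I_(m a)) a b).
Arguments tla a b : clear implicits.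
Definition tL2 (a : 'I_n) := \sum_(b < m a) tla a b.

Definition LHSf (k : 'I_(\sum_(j < \sum_(i < n) m i) tl j)) : E :=
  let c := unjoin tl k in existT _ (unjoin m (tag c)) (tagged c).
Definition Rp (d : {a : 'I_n & 'I_(tL2 a)}) : E :=
  let e := unjoin (tla (tag d)) (tagged d) in existT (fun c => 'I_(T c)) (existT _ (tag d) (tag e)) (tagged e).
Definition RHSf (k : 'I_(\sum_(a < n) tL2 a)) : E := Rp (unjoin tL2 k).

Definition encn (x : E) := offs tl (joinT m (tag x)) + val (tagged x).

Lemma tl_joinT c : tl (joinT m c) = T c.
Proof. by rewrite /tl joinTK. Qed.

Lemma encn_lt x : encn x < \sum_(j < \sum_(i < n) m i) tl j.
Proof.
have H : val (tagged x) < tl (joinT m (tag x)) by rewrite tl_joinT; exact: ltn_ord.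
exact: (join_subproof (Ordinal H)).
Qed.

Lemma encn_inj x y : encn x = encn y -> x = y.
Proof.
case: x => c z; case: y => c' z'; rewrite /encn /=.
have H : val z < tl (joinT m c) by rewrite tl_joinT; exact: ltn_ord.
have H' : val z' < tl (joinT m c') by rewrite tl_joinT; exact: ltn_ord.
move=> /(join_inj_nat H H') [/joinT_inj cc zz]; subst c'.
by congr existT; apply: val_inj.
Qed.

Lemma encn_LHS k : encn (LHSf k) = k.
Proof. by rewrite /encn /LHSf /= unjoinK -joinT_val unjoinK. Qed.

Lemma encn_join_lt (c c' : {a : 'I_n & 'I_(m a)}) (z : 'I_(T c)) (z' : 'I_(T c')) :
  joinT m c < joinT m c' -> encn (existT _ c z) < encn (existT _ c' z').
Proof.
move=> lt; rewrite /encn /=.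
have H : val z < tl (joinT m c) by rewrite tl_joinT; exact: ltn_ord.
exact: join_lt_nat H lt.
Qed.

Lemma Rp_mono (d1 d2 : {a : 'I_n & 'I_(tL2 a)}) :
  (tag d1 < tag d2) || ((val (tag d1) == val (tag d2)) && (val (tagged d1) < val (tagged d2))) ->
  encn (Rp d1) < encn (Rp d2).
Proof.
case/orP=> [lt|/andP [/eqP aa lt]].
  by apply: encn_join_lt; rewrite joinT_ltn /= lt.
case: d1 d2 aa lt => a y [a' y'] /= aa; have {}aa : a = a' by apply: val_inj.
subst a' => lt; rewrite /Rp /=.
have := lt; rewrite -(@unjoinK _ (tla a) y) -(@unjoinK _ (tla a) y') joinT_ltn.
case: (unjoin (tla a) y) => b z; case: (unjoin (tla a) y') => b' z' /=.
rewrite !joinTK /=.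
case/orP=> [lt2|/andP [/eqP bb lt2]].
  by apply: encn_join_lt; rewrite joinT_ltn /= ltnn eqxx lt2 orbT.
have {}bb : b = b' by apply: val_inj.
subst b'; rewrite /encn /=; by rewrite ltn_add2l.
Qed.

Lemma encn_RHS (e : \sum_(a < n) tL2 a = \sum_(j < \sum_(i < n) m i) tl j) k :
  encn (RHSf k) = k.
Proof.
apply: (mono_id (f := fun k => encn (RHSf k))) => [i j ij|i].
  by apply: Rp_mono; rewrite -joinT_ltn !unjoinK.
by rewrite e; apply: encn_lt.
Qed.

Lemma LHS_RHS (e : \sum_(a < n) tL2 a = \sum_(j < \sum_(i < n) m i) tl j) k1 k2 :
  val k1 = val k2 -> LHSf k1 = RHSf k2.
Proof. by move=> kk; apply: encn_inj; rewrite encn_LHS encn_RHS. Qed.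
End Triple.

Section Forward.
Variables (P : scoll) (O : operad P).
Local Notation PO := (P_ob P).
Local Notation X := (uP P).

Definition mxof (x : sd_ob X X) : 'I_(tag (projT1 x)) -> nat := fun i => tag (projT2 x i).
Arguments mxof : clear implicits.

Definition Fob (x : sd_ob X X) : PO :=
  existT P _ (op_g O (tag (projT1 x)) (tagged (projT1 x)) (mxof x) (fun i => tagged (projT2 x i))).

Definition Fnat (x : sd_ob X X) : 'I_(tag (Fob x)) -> sd_fib x := unjoin (mxof x).

Lemma equiv2' (u : PO) (psi psi2 : 'I_(tag u) -> PO) (tau : forall a, P_hom (psi a) (psi2 a)) :
  exists g : P_hom (Fob (existT _ u psi)) (Fob (existT _ u psi2)),
    forall a b, val (P_fibh g (join (mxof (existT _ u psi)) a b))
              = offs (mxof (existT _ u psi2)) a + val (P_fibh (tau a) b).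
Proof.
pose s a := sval (tau a).
have Hv : forall a b, val (P_fibh (tau a) b) = val (s a b) by [].
have Hp : psi2 = fun a => existT P (tag (psi a)) (Defs.act (s a) (tagged (psi a))).
  by apply: functional_extensionality => a; rewrite (proj2_sig (tau a)).
suff : exists g : P_hom (Fob (existT _ u psi)) (Fob (existT _ u psi2)),
    forall a b, val (P_fibh g (join (mxof (existT _ u psi)) a b))
              = offs (mxof (existT _ u psi2)) a + val (s a b).
  by case=> g Hg; exists g => a b; rewrite Hg Hv.
clearbody s; clear Hv tau; subst psi2.
case: u psi s => n p psi s /=.
have [t [Ht Ea]] := op_equiv2 _ O n p (fun i => tag (psi i)) (fun i => tagged (psi i)) s.
have pr : existT P _ (Defs.act t (tagged (Fob (existT _ (existT P n p) psi))))
        = Fob (existT _ (existT P n p) (fun a => existT P (tag (psi a)) (Defs.act (s a) (tagged (psi a))))).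
  by rewrite /Fob /= Ea.
exists (exist _ t pr) => a b /=.
by rewrite Ht.
Qed.

Lemma equiv1' (u v : PO) (f : P_hom u v) (psi' : 'I_(tag v) -> PO) :
  exists g : P_hom (Fob (existT _ u (fun a => psi' (P_fibh f a)))) (Fob (existT _ v psi')),
    forall a b, val (P_fibh g (join (mxof (existT _ u (fun a => psi' (P_fibh f a)))) a b))
              = offs (mxof (existT _ v psi')) (P_fibh f a) + val b.
Proof.
case: f => s e; subst v.
pose f0 : P_hom u (existT P (tag u) (Defs.act s (tagged u))) := exist _ s erefl.
have E : P_fibh f0 = (fun a => s a).
  by apply: functional_extensionality => a; apply: val_inj.
rewrite -/f0 E; clear E f0.
case: u s psi' => n p s psi' /=.
have [t [Ht Ea]] := op_equiv1 _ O n s p (fun i => tag (psi' i)) (fun i => tagged (psi' i)).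
exists (exist _ t Ea) => a b /=.
by rewrite Ht.
Qed.

Lemma Fhom_ex (x y : sd_ob X X) (h : sd_hom x y) :
  exists g : P_hom (Fob x) (Fob y),
    forall c, P_fibh g (joinT (mxof x) c) = joinT (mxof y) (sd_fibh h c).
Proof.
case: x h => u psi; case: y => v psi'; case=> f tau /=.
have [g2 H2] := equiv2' tau.
have [g1 H1] := equiv1' f psi'.
exists (P_comp g1 g2) => -[a b]; apply: val_inj.
rewrite P_fibh_comp.
have -> : P_fibh g2 (joinT (mxof (existT _ u psi)) (existT _ a b))
        = join (mxof (existT _ u (fun a => psi' (P_fibh f a)))) a (P_fibh (tau a) b).
  by apply: val_inj; rewrite H2.
by rewrite H1.
Qed.

Definition Fhom (x y : sd_ob X X) (h : sd_hom x y) : P_hom (Fob x) (Fob y) :=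
  proj1_sig (constructive_indefinite_description _ (Fhom_ex h)).

Lemma Fhom_spec x y (h : sd_hom x y) c :
  P_fibh (Fhom h) (joinT (mxof x) c) = joinT (mxof y) (sd_fibh h c).
Proof. exact: (proj2_sig (constructive_indefinite_description _ (Fhom_ex h))). Qed.

Lemma Fhom_fibh x y (h : sd_hom x y) k :
  unjoin (mxof y) (P_fibh (Fhom h) k) = sd_fibh h (unjoin (mxof x) k).
Proof. by rewrite -{1}(unjoinK k) Fhom_spec joinTK. Qed.

Definition Fmu_d : dmor (sd X X) X := @DMor (sd X X) X Fob Fhom Fnat.

Lemma Fmu_id (x : ob (sd X X)) : dhom Fmu_d (idc x) = idc (dob Fmu_d x).
Proof.
apply: P_hom_ext => k; change (val (P_fibh (Fhom (sd_id x)) k) = val (P_fibh (P_id (Fob x)) k)); rewrite P_fibh_id.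
by rewrite -{1}(unjoinK k) Fhom_spec sd_fibh_id unjoinK.
Qed.

Lemma Fmu_comp (x y z : ob (sd X X)) (g : hom y z) (f : hom x y) :
  dhom Fmu_d (Defs.comp g f) = Defs.comp (dhom Fmu_d g) (dhom Fmu_d f).
Proof.
apply: P_hom_ext => k; change (val (P_fibh (Fhom (sd_comp g f)) k) = val (P_fibh (P_comp (Fhom g) (Fhom f)) k)); rewrite P_fibh_comp.
by rewrite -(unjoinK k) !Fhom_spec sd_fibh_comp.
Qed.

Lemma Fmu_nat (x y : ob (sd X X)) (f : hom x y) a :
  dnat Fmu_d y (fibh (dhom Fmu_d f) a) = fibh f (dnat Fmu_d x a).
Proof. exact: Fhom_fibh. Qed.

Definition Fmu : cmor (sd X X) X := CMor Fmu_id Fmu_comp Fmu_nat.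

Definition Feta_d : dmor Defs.one X :=
  @DMor Defs.one X (fun _ => existT P 1 (op_e O)) (fun _ _ _ => P_id _) (fun _ _ => tt).

Lemma Feta_id (x : ob Defs.one) : dhom Feta_d (idc x) = idc (dob Feta_d x).
Proof. by []. Qed.

Lemma Feta_comp (x y z : ob Defs.one) (g : hom y z) (f : hom x y) :
  dhom Feta_d (Defs.comp g f) = Defs.comp (dhom Feta_d g) (dhom Feta_d f).
Proof. apply: P_hom_ext => k; change (val (P_fibh (P_id (existT P 1 (op_e O))) k) = val (P_fibh (P_comp (P_id _) (P_id _)) k)); by rewrite P_fibh_comp !P_fibh_id. Qed.

Lemma Feta_nat (x y : ob Defs.one) (f : hom x y) a :
  dnat Feta_d y (fibh (dhom Feta_d f) a) = fibh f (dnat Feta_d x a).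
Proof. by case: (fibh f _). Qed.

Definition Feta : cmor Defs.one X := CMor Feta_id Feta_comp Feta_nat.

End Forward.
Arguments mxof {P} x i.

Section ForwardAx.
Variables (P : scoll) (O : operad P).
Local Notation PO := (P_ob P).
Local Notation X := (uP P).
Local Notation mu := (Fmu O).
Local Notation eta := (Feta O).

Definition FL := dcomp mu (msd mu (cid X)).
Definition FR := dcomp mu (dcomp (msd (cid X) mu) (assoc_mor X X X)).

Lemma Fassoc_ob x : dob FR x = dob FL x.
Proof.
case: x => [[[n p] psi] chi] /=.
pose m := mxof (existT (fun d : PO => P_fib d -> PO) (existT P n p) psi).
have -> : (fun a' : P_fib (existT P n p) =>
        Fob O (existT (fun e : PO => P_fib e -> PO) (psi a')
             (fun b : P_fib (psi a') => chi (existT (fun a : P_fib (existT P n p) => P_fib (psi a)) a' b))))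
  = (fun a' : P_fib (existT P n p) =>
        Fob O (existT (fun e : PO => P_fib e -> PO) (psi a')
             (fun b : P_fib (psi a') => chi (unjoin m (join m a' b))))).
  apply: functional_extensionality => a'; congr (Fob O (existT _ _ _)).
  by apply: functional_extensionality => b; rewrite unjoin_join.
apply: esym.
exact: (op_assoc _ O n p m (fun i => tagged (psi i)) (fun k => tag (chi (unjoin m k))) (fun k => tagged (chi (unjoin m k)))).
Qed.

Lemma Fassoc_nat x :
  existT (fun y : PO => 'I_(tag y) -> fib x) (dob FR x) (dnat FR x)
  = existT (fun y : PO => 'I_(tag y) -> fib x) (dob FL x) (dnat FL x).
Proof.
apply: sig_ord_eq; first exact: Fassoc_ob.
move: x => [[[n p] psi] chi] i1 i2 H.
have e := congr1 tag (Fassoc_ob (existT _ (existT _ (existT P n p) psi) chi)).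
symmetry; exact: (LHS_RHS (m := mxof (existT _ (existT P n p) psi)) (T := fun c => tag (chi c)) e (esym H)).
Qed.

Lemma Fmu_inj : dinj mu.
Proof. by move=> x; apply: unjoin_inj. Qed.

Lemma Fassoc : dmor_eq FL FR.
Proof.
apply: dmor_eq_refl; apply: esym; apply: dmor_ext.
- exact: Fassoc_ob.
- exact: Fassoc_nat.
- apply: natural_dcomp; [exact: natural_cm | apply: natural_dcomp; [exact: natural_msd | exact: natural_assoc]].
- apply: natural_dcomp; [exact: natural_cm | exact: natural_msd].
- apply: dinj_dcomp; [exact: Fmu_inj | apply: dinj_msd; [exact: Fmu_inj | exact: dinj_cid]].
Qed.

Definition FUL := dcomp mu (msd eta (cid X)).

Lemma Funitl : dmor_eq FUL (lunitor X).
Proof.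
apply: dmor_eq_refl; apply: dmor_ext.
- move=> [[] psi] /=; rewrite /Fob /=.
  rewrite (op_unitl _ O (fun _ => tag (psi tt)) (fun _ => tagged (psi tt))).
  by case: (psi tt).
- move=> [[] psi]; apply: sig_ord_eq.
    move=> /=; rewrite /Fob /=.
    rewrite (op_unitl _ O (fun _ => tag (psi tt)) (fun _ => tagged (psi tt))).
    by case: (psi tt).
  move=> i1 i2 H /=.
  congr existT; apply: val_inj; rewrite /= -H /Fnat.
  rewrite -{2}(@unjoinK _ _ i1) joinT_val.
  by case: (unjoin _ i1) => a b /=; rewrite (ord1 a) offs_ord0.
- apply: natural_dcomp; [exact: natural_cm | exact: natural_msd].
- exact: natural_lunitor.
- exact: dinj_lunitor.
Qed.


Definition FUR := dcomp mu (msd (cid X) eta).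

Lemma Funitr_ob x : dob FUR x = dob (runitor X) x.
Proof. by move: x => [[n p] psi] /=; rewrite /Fob /= (op_unitr _ O n p). Qed.

Lemma Funitr : dmor_eq FUR (runitor X).
Proof.
apply: dmor_eq_refl; apply: dmor_ext.
- exact: Funitr_ob.
- move=> x; apply: sig_ord_eq; first exact: Funitr_ob.
  move: x => [[n p] psi] i1 i2 H /=.
  have -> : projT1 (Fnat i1) = i2.
    apply: val_inj; rewrite -H /Fnat.
    rewrite -{2}(@unjoinK _ _ i1) joinT_val.
    case: (unjoin _ i1) => a b /=; rewrite (ord1 b) addn0.
    exact: (esym (offs_const1 a)).
  by [].
- apply: natural_dcomp; [exact: natural_cm | exact: natural_msd].
- exact: natural_runitor.
- exact: dinj_runitor.
Qed.

Lemma Fiso x : bijective (dnat mu x).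
Proof. by exists (joinT _); [exact: unjoinK | exact: joinTK]. Qed.

Lemma Ford x (i j : 'I_(tag (dob mu x))) :
  i <= j -> lexle (dnat mu x i) (dnat mu x j).
Proof. by rewrite -{1}(@unjoinK _ _ i) -{1}(@unjoinK _ _ j) joinT_leq. Qed.

Lemma Feta_iso x : bijective (dnat eta x).
Proof. by exists (fun _ => ord0); [move=> i; rewrite (ord1 i) | case]. Qed.

Definition Fmon : monoid_str P := @MonStr P mu eta Fassoc Funitl Funitr Fiso Ford Feta_iso.

End ForwardAx.

Section Backward.
Variables (P : scoll) (M : monoid_str P).
Local Notation PO := (P_ob P).
Local Notation X := (uP P).
Local Notation mu := (ms_mu M).
Local Notation eta := (ms_eta M).

Lemma ar_eq (x : sd_ob X X) : tag (dob mu x) = \sum_(i < tag (projT1 x)) mxof x i.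
Proof.
case: (ms_mu_iso M x) => g h1 h2.
apply/eqP; rewrite eqn_leq; apply/andP; split.
  have := leq_card (fun k => joinT (mxof x) (dnat mu x k)).
  rewrite !card_ord; apply=> a b /joinT_inj E; exact: (can_inj h1 E).
have := leq_card (fun s => g (unjoin (mxof x) s)).
rewrite !card_ord; apply=> a b /(can_inj h2) E; exact: (unjoin_inj E).
Qed.

Lemma dnat_lex x k : val (joinT (mxof x) (dnat mu x k)) = val k.
Proof.
apply: (mono_id (f := fun k => val (joinT (mxof x) (dnat mu x k)))) => [i j ij|i].
  have le : joinT (mxof x) (dnat mu x i) <= joinT (mxof x) (dnat mu x j).
    by rewrite joinT_leq; exact: (ms_mu_ord (ltnW ij)).
  rewrite ltn_neqAle le andbT; apply/negP => /eqP /val_inj /joinT_inj.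
  case: (ms_mu_iso M x) => g h1 _ /(can_inj h1) E.
  by move: ij; rewrite E ltnn.
rewrite ar_eq; exact: ltn_ord.
Qed.

Lemma dnat_spec x k c : val k = val (joinT (mxof x) c) -> dnat mu x k = c.
Proof. by move=> H; apply: joinT_inj; apply: val_inj; rewrite dnat_lex. Qed.

Definition mkx n (p : P n) (m : 'I_n -> nat) (q : forall i, P (m i)) : sd_ob X X :=
  existT (fun d : PO => P_fib d -> PO) (existT P n p) (fun i => existT P (m i) (q i)).

Definition gamx (x : sd_ob X X) : P (\sum_(i < tag (projT1 x)) mxof x i) :=
  castP (ar_eq x) (tagged (dob mu x)).

Lemma gamx_eq x : existT P _ (gamx x) = dob mu x.
Proof. by rewrite /gamx existT_castP; case: (dob mu x). Qed.

Definition Gg n (p : P n) (m : 'I_n -> nat) (q : forall i, P (m i)) : P (\sum_(i < n) m i) :=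
  gamx (mkx p q).

Lemma eta_ar : tag (dob eta tt) = 1.
Proof.
case: (ms_eta_iso M tt) => g h1 h2.
have H2 := leq_card (dnat eta tt) (can_inj h1); rewrite card_ord card_unit in H2.
have H1 : 0 < tag (dob eta tt) := leq_ltn_trans (leq0n _) (ltn_ord (g tt)).
by apply/eqP; rewrite eqn_leq H2.
Qed.

Definition Ge : P 1 := castP eta_ar (tagged (dob eta tt)).

Lemma Ge_eq : existT P 1 Ge = dob eta tt.
Proof. by rewrite /Ge existT_castP; case: (dob eta tt). Qed.


Lemma Ghom (x1 x2 : sd_ob X X) (h : sd_hom x1 x2) :
  exists t : 'S_(\sum_(i < tag (projT1 x1)) mxof x1 i),
    (forall c, val (t (joinT (mxof x1) c)) = val (joinT (mxof x2) (sd_fibh h c)))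
    /\ existT P _ (Defs.act t (gamx x1)) = existT P _ (gamx x2).
Proof.
exists (cast_perm (ar_eq x1) (sval (dhom mu h))); split.
  move=> c; rewrite cast_permE /=.
  set k := cast_ord (esym (ar_eq x1)) (joinT (mxof x1) c).
  have dk : dnat mu x1 k = c by apply: dnat_spec.
  have E := @cm_nat _ _ mu _ _ h k; rewrite dk in E.
  transitivity (val (joinT (mxof x2) (dnat mu x2 (fibh (dhom mu h) k)))).
    by rewrite dnat_lex.
  by rewrite E.
rewrite /gamx act_castP existT_castP gamx_eq.
exact: (proj2_sig (dhom mu h)).
Qed.

Lemma Gunitl (m : 'I_1 -> nat) (q : forall i, P (m i)) :
  existT P _ (Gg Ge q) = existT P _ (q ord0).
Proof.
transitivity (dob mu (mkx Ge q)); first exact (gamx_eq (mkx _ _)).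
case: (ms_unitl M) => U1 _ _.
have := U1 (existT (fun d : ob Defs.one => fib d -> ob X) tt (fun _ => existT P (m ord0) (q ord0))).
move=> /= <-; congr (dob mu _).
apply: sig_ord_eq; first exact: Ge_eq.
by move=> i1 i2 _; rewrite (ord1 i1).
Qed.

Lemma Gunitr n (p : P n) :
  existT P _ (Gg p (fun _ : 'I_n => Ge)) = existT P n p.
Proof.
transitivity (dob mu (mkx p (fun _ : 'I_n => Ge))); first exact (gamx_eq (mkx p (fun _ : 'I_n => Ge))).
case: (ms_unitr M) => U1 _ _.
have := U1 (existT (fun d : ob X => fib d -> ob Defs.one) (existT P n p) (fun _ => tt)).
move=> /= <-; congr (dob mu _).
rewrite /mkx; congr existT; apply: functional_extensionality => i.
exact: Ge_eq.
Qed.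


Lemma Gassoc n (p : P n) (m : 'I_n -> nat) (q : forall i, P (m i))
      (l : 'I_(\sum_(i < n) m i) -> nat) (r : forall j, P (l j)) :
  existT P _ (Gg (Gg p q) r)
  = existT P _ (Gg p (fun i => Gg (q i) (fun j => r (join m i j)))).
Proof.
pose chi := fun c : sd_fib (mkx p q) => existT P (l (joinT m c)) (r (joinT m c)).
transitivity (dob mu (mkx (Gg p q) r)); first exact (gamx_eq (mkx (Gg p q) r)).
have S1 : mkx (Gg p q) r = existT _ (dob mu (mkx p q)) (fun a' => chi (dnat mu _ a')).
  apply: sig_ord_eq; first exact (gamx_eq (mkx p q)).
  move=> i1 i2 H; rewrite /chi.
  have -> : joinT m (dnat mu (mkx p q) i2) = i1.
    by apply: val_inj; rewrite H; exact (dnat_lex i2).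
  by [].
rewrite S1.
case: (ms_assoc M) => A1 _ _.
have := A1 (existT (fun d : ob (sd X X) => fib d -> ob X) (mkx p q) chi).
move=> /= ->.
symmetry.
transitivity (dob mu (mkx p (fun i => Gg (q i) (fun j => r (join m i j))))).
  exact (gamx_eq (mkx p (fun i => Gg (q i) (fun j => r (join m i j))))).
congr (dob mu _); rewrite /mkx; congr existT.
apply: functional_extensionality => i.
exact (gamx_eq (mkx (q i) (fun j => r (join m i j)))).
Qed.


Lemma Gequiv1 n (s : 'S_n) (p : P n) (m : 'I_n -> nat) (q : forall i, P (m i)) :
  exists t : 'S_(\sum_(i < n) m (s i)),
    (forall a (b : 'I_(m (s a))),
        nat_of_ord (t (join (fun i => m (s i)) a b)) = nat_of_ord (join m (s a) b))
    /\ existT P _ (Defs.act t (Gg p (fun i => q (s i))))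
       = existT P _ (Gg (Defs.act s p) q).
Proof.
pose f : P_hom (existT P n p) (existT P n (Defs.act s p)) := exist _ s erefl.
have Ef : forall a, P_fibh f a = s a by move=> a; apply: val_inj.
pose tau := fun a => P_hom_of_eq (congr1 (fun i => existT P (m i) (q i)) (esym (Ef a))).
pose h : sd_hom (mkx p (fun i => q (s i))) (mkx (Defs.act s p) q) := existT _ f tau.
have [t [Ht Ea]] := Ghom h.
exists t; split; last exact Ea.
move=> a b; have := Ht (existT _ a b).
rewrite !joinT_val /= Ef => ->.
by rewrite perm1.
Qed.

Lemma Gequiv2 n (p : P n) (m : 'I_n -> nat) (q : forall i, P (m i)) (tau : forall i, 'S_(m i)) :
  exists t : 'S_(\sum_(i < n) m i),
    (forall a (b : 'I_(m a)), t (join m a b) = join m a (tau a b))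
    /\ Defs.act t (Gg p q) = Gg p (fun i => Defs.act (tau i) (q i)).
Proof.
pose f : P_hom (existT P n p) (existT P n p) := P_id _.
have Ef : forall a, P_fibh f a = a by move=> a; exact: P_fibh_id.
pose tau' := fun a => P_comp
  (P_hom_of_eq (congr1 (fun i => existT P (m i) (Defs.act (tau i) (q i))) (esym (Ef a))))
  (exist _ (tau a) erefl : P_hom (existT P (m a) (q a)) (existT P (m a) (Defs.act (tau a) (q a)))).
pose h : sd_hom (mkx p q) (mkx p (fun i => Defs.act (tau i) (q i))) := existT _ f tau'.
have [t [Ht Ea]] := Ghom h.
exists t; split; last exact: (existT_P_inj Ea).
move=> a b; apply: val_inj; have := Ht (existT _ a b).
rewrite !joinT_val /= => ->.
by rewrite mulg1 Ef.
Qed.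

Definition Gop : operad P :=
  Operad P Ge (fun n p m q => Gg p q) Gunitl Gunitr Gassoc Gequiv1 Gequiv2.

End Backward.

Section RoundTrip.
Variable P : scoll.
Local Notation X := (uP P).

Lemma operad_ext (O1 O2 : operad P) :
  op_e O1 = op_e O2 -> (forall n p m q, op_g O1 n p m q = op_g O2 n p m q) -> O1 = O2.
Proof.
case: O1 => e1 g1 a1 b1 c1 d1 f1; case: O2 => e2 g2 a2 b2 c2 d2 f2 /= ee gg.
subst e2.
have E : g1 = g2.
  apply: functional_extensionality_dep => n; apply: functional_extensionality_dep => p.
  apply: functional_extensionality_dep => m; apply: functional_extensionality_dep => q.
  exact: gg.
subst g2; f_equal; apply: proof_irrelevance.
Qed.

Lemma cmor_ext (Y Z : dcat) (C1 C2 : cmor Y Z) : cm C1 = cm C2 -> C1 = C2.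
Proof.
case: C1 => c1 a1 b1 d1; case: C2 => c2 a2 b2 d2 /= E; subst c2.
f_equal; apply: proof_irrelevance.
Qed.

Lemma monoid_ext (M1 M2 : monoid_str P) :
  ms_mu M1 = ms_mu M2 -> ms_eta M1 = ms_eta M2 -> M1 = M2.
Proof.
case: M1 => m1 e1 a1 b1 c1 d1 f1 g1; case: M2 => m2 e2 a2 b2 c2 d2 f2 g2 /= E1 E2.
subst m2 e2; f_equal; apply: proof_irrelevance.
Qed.

Lemma cancel_fg : cancel (@Fmon P) (@Gop P).
Proof.
move=> O; apply: operad_ext => /=.
  by rewrite /Ge castP_id.
by move=> n p m q; rewrite /Gg /gamx castP_id.
Qed.

Lemma rt_mu_ob (M : monoid_str P) x : dob (Fmu (Gop M)) x = dob (ms_mu M) x.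
Proof.
move: x => [[n p] psi] /=; rewrite /Fob /=.
transitivity (dob (ms_mu M) (mkx (P := P) p (fun i => tagged (psi i)))).
  exact (@gamx_eq P M (mkx (P := P) p (fun i => tagged (psi i)))).
f_equal; rewrite /mkx; congr existT.
by apply: functional_extensionality => i; case: (psi i).
Qed.

Lemma rt_mu_nat (M : monoid_str P) x :
  existT (fun y : P_ob P => 'I_(tag y) -> fib x) (dob (Fmu (Gop M)) x) (dnat (Fmu (Gop M)) x)
  = existT (fun y : P_ob P => 'I_(tag y) -> fib x) (dob (ms_mu M) x) (dnat (ms_mu M) x).
Proof.
apply: sig_ord_eq; first exact: rt_mu_ob.
move=> i1 i2 H; symmetry; apply: dnat_spec.
rewrite -H. exact: (esym (f_equal val (unjoinK i1))).
Qed.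

Lemma rt_eta_ob (M : monoid_str P) x : dob (Feta (Gop M)) x = dob (ms_eta M) x.
Proof. by case: x; exact: Ge_eq. Qed.

Lemma rt_eta_nat (M : monoid_str P) x :
  existT (fun y : P_ob P => 'I_(tag y) -> fib x) (dob (Feta (Gop M)) x) (dnat (Feta (Gop M)) x)
  = existT (fun y : P_ob P => 'I_(tag y) -> fib x) (dob (ms_eta M) x) (dnat (ms_eta M) x).
Proof.
apply: sig_ord_eq; first exact: rt_eta_ob.
move=> i1 i2 _ /=; move: (dnat (ms_eta M) x i2); clear i1 i2; case: x; by case.
Qed.

Lemma cancel_gf : cancel (@Gop P) (@Fmon P).
Proof.
move=> M; apply: monoid_ext.
- apply: cmor_ext; apply: dmor_ext.
  + exact: rt_mu_ob.
  + exact: rt_mu_nat.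
  + exact: natural_cm.
  + exact: natural_cm.
  + move=> x; case: (ms_mu_iso M x) => g h1 _; exact: can_inj h1.
- apply: cmor_ext; apply: dmor_ext.
  + exact: rt_eta_ob.
  + exact: rt_eta_nat.
  + exact: natural_cm.
  + exact: natural_cm.
  + move=> x; case: (ms_eta_iso M x) => g h1 _; exact: can_inj h1.
Qed.

End RoundTrip.

Theorem proposition2p3 (P : scoll) :
  exists (f : operad P -> monoid_str P) (g : monoid_str P -> operad P),
    cancel f g /\ cancel g f.
Proof.
exists (@Fmon P), (@Gop P); split; [exact: cancel_fg | exact: cancel_gf].
Qed.
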